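(* For any finite, simple, connected graph $G$, if $\gamma_P(G)=1$, then $\gamma_P(G\,\Box\,P_2)\le 2$.
   Context: The Cartesian product $G\,\Box\,H$ has vertex set $V(G)\times V(H)$, with $(g,h)$ adjacent to $(g',h')$ iff either $g=g'$ and $hh'\in E(H)$, or $h=h'$ and $gg'\in E(G)$; $P_2$ is the path on two vertices. For $U\subseteq V$, $cl(U)$ is obtained by coloring $U$ black and repeatedly applying: if a black vertex has exactly one white neighbor, that neighbor becomes black. $S$ is a power dominating set if $cl(N[S])=V$; $\gamma_P$ is the minimum size of a power dominating set. *)

(* Defs.v *)
From mathcomp Require Import all_boot.
Set Implicit Arguments. Unset Strict Implicit. Unset Printing Implicit Defensive.

Definition simple_graph (T : finType) (e : rel T) : Prop :=
  symmetric e /\ irreflexive e.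

Definition connected_graph (T : finType) (e : rel T) : Prop :=
  forall x y : T, connect e x y.

Definition nbhd (T : finType) (e : rel T) (v : T) : {set T} := [set w | e v w].
Definition closed_nbhd (T : finType) (e : rel T) (S : {set T}) : {set T} :=
  S :|: [set w | [exists v in S, e v w]].

Definition prop_step (T : finType) (e : rel T) (B : {set T}) : {set T} :=
  B :|: [set w | [exists v in B, (e v w) && (#|nbhd e v :\: B| == 1) && (w \notin B)]].

(* cl(U): repeat the propagation rule until nothing changes; since each non-final
   round adds a vertex, #|T| rounds suffice. *)
Definition cl (T : finType) (e : rel T) (U : {set T}) : {set T} :=
  iter #|T| (prop_step e) U.

Definition power_dominating (T : finType) (e : rel T) (S : {set T}) : bool :=
  cl e (closed_nbhd e S) == [set: T].

Definition gammaP (T : finType) (e : rel T) : nat :=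
  \big[minn/#|T|]_(S : {set T} | power_dominating e S) #|S|.

Definition cart_rel (T1 T2 : finType) (e1 : rel T1) (e2 : rel T2) : rel (T1 * T2) :=
  fun x y => ((x.1 == y.1) && e2 x.2 y.2) || ((x.2 == y.2) && e1 x.1 y.1).

Definition P2_rel : rel bool := fun a b => a != b.

(* Main.v *)
Require Import Defs.
From mathcomp Require Import all_boot.

Section Aux.
Variables (T : finType) (e : rel T).
Notation E2 := (cart_rel e P2_rel).

Definition X2 (B : {set T}) : {set T * bool} := [set x | x.1 \in B].

Lemma bigmin_le (I : eqType) (r : seq I) (P : pred I) (F : I -> nat) m i :
  i \in r -> P i -> \big[minn/m]_(j <- r | P j) F j <= F i.
Proof.
elim: r => // a r IH; rewrite inE big_cons => /orP [/eqP <- -> | ir Pi].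
  exact: geq_minl.
case: (P a); last exact: IH.
exact: leq_trans (geq_minr _ _) (IH ir Pi).
Qed.

Lemma step_ext (U : finType) (f : rel U) (B : {set U}) : B \subset prop_step f B.
Proof. exact: subsetUl. Qed.

Lemma iter_ext (U : finType) (f : rel U) n (B : {set U}) : B \subset iter n (prop_step f) B.
Proof.
elim: n => //= n IH; apply: subset_trans IH _; exact: step_ext.
Qed.

Lemma nb_X2 (B : {set T}) u c : u \in B ->
  #|nbhd E2 (u, c) :\: X2 B| = #|nbhd e u :\: B|.
Proof.
move=> uB.
have -> : nbhd E2 (u, c) :\: X2 B = [set (x, c) | x in nbhd e u :\: B].
  apply/setP => [[w b]]; rewrite !inE /cart_rel /P2_rel /=.
  apply/idP/imsetP.
  - case/andP => wB /orP [/andP [/eqP wu _] | /andP [/eqP bc euw]].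
      by rewrite -wu uB in wB.
    by exists w; rewrite ?inE ?wB ?euw // bc.
  - case=> x; rewrite !inE => /andP [xB eux] [-> ->].
    by rewrite xB eqxx eux orbT.
rewrite card_imset //; by move=> x y [].
Qed.

Lemma step_X2 B : prop_step E2 (X2 B) = X2 (prop_step e B).
Proof.
apply/setP => [[w b]]; rewrite /prop_step !inE /=.
case wB: (w \in B) => //=.
apply/existsP/existsP.
- case=> [[u c]]; rewrite !inE /= => /and3P [uB /andP [Eu /eqP nb] _].
  exists u; rewrite uB /=.
  move: Eu; rewrite /cart_rel /P2_rel /= => /orP [/andP [/eqP uw _]|/andP [_ euw]].
    by rewrite uw wB in uB.
  by rewrite euw -(@nb_X2 _ _ c uB) nb.
- case=> u /and3P [uB /andP [euw nb] _].
  exists (u, b); rewrite !inE /= uB nb_X2 // nb andbT /=.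
  by rewrite /cart_rel /= eqxx euw orbT.
Qed.

Lemma iter_X2 n B : iter n (prop_step E2) (X2 B) = X2 (iter n (prop_step e) B).
Proof. by elim: n => //= n ->; rewrite step_X2. Qed.

Lemma cn_X2 S : closed_nbhd E2 (X2 S) = X2 (closed_nbhd e S).
Proof.
apply/setP => [[w b]]; rewrite /closed_nbhd !inE /=.
case wS: (w \in S) => //=.
apply/existsP/existsP.
- case=> [[u c]]; rewrite !inE /= /cart_rel /P2_rel /= => /andP [uS /orP [/andP [/eqP uw _]|/andP [_ euw]]].
    by rewrite uw wS in uS.
  by exists u; rewrite uS.
- case=> u /andP [uS euw]; exists (u, b); rewrite !inE /= uS /cart_rel /=.
  by rewrite eqxx euw orbT.
Qed.

Lemma pd_X2 S : power_dominating e S -> power_dominating E2 (X2 S).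
Proof.
rewrite /power_dominating /cl cn_X2 card_prod card_bool muln2 -addnn iter_X2 iterD.
move/eqP => H; rewrite H; apply/eqP/setP => x; rewrite !inE.
have := @iter_ext _ e #|T| [set: T]; move/subsetP/(_ x.1); rewrite !inE; exact.
Qed.

Lemma card_X2 S : #|X2 S| = (#|S| * 2)%N.
Proof.
have -> : X2 S = setX S [set: bool] by apply/setP => x; rewrite !inE andbT.
by rewrite cardsX cardsT card_bool.
Qed.

Lemma gammaP_attained :
  (gammaP e = #|T|) \/ exists2 S, power_dominating e S & #|S| = gammaP e.
Proof.
rewrite /gammaP.
apply: (big_ind (fun x => (x = #|T|) \/ exists2 S, power_dominating e S & #|S| = x)).
- by left.
- move=> x y Hx Hy; rewrite /minn; by case: ltnP.
- move=> S PS; right; by exists S.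
Qed.

End Aux.

Theorem mainTheorem12 (T : finType) (e : rel T) :
  simple_graph e -> connected_graph e ->
  gammaP e = 1 ->
  gammaP (cart_rel e P2_rel) <= 2.
Proof.
move=> _ _ g1.
have [S PS cS] : exists2 S, power_dominating e S & #|S| = 1.
  case: (@gammaP_attained _ e) => [|[S PS cS]]; last by exists S; rewrite // cS.
  rewrite g1 => cT; exists [set: T]; last by rewrite cardsT.
  rewrite /power_dominating; apply/eqP/setP => x; rewrite inE.
  have := @iter_ext _ e #|T| (closed_nbhd e [set: T]); move/subsetP; apply.
  by rewrite /closed_nbhd !inE.
rewrite (_ : 2 = #|@X2 T S|); last by rewrite card_X2 cS.
rewrite /gammaP.
by apply: bigmin_le; [exact: mem_index_enum | exact: pd_X2].
Qed.
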